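(* Let $q$ be a power of an odd prime $p$, let $b\in\mathbb{F}_q$ with $b\ne0$, and let $n\ge2$ be an integer. Let $r\ge0$ be such that $p^r$ divides $n+1$ but $p^{r+1}$ does not, and let $m\ge0$ be defined by $n+1=p^r(m+1)$. Assume $r\ge1$, and assume: if $q\equiv1\pmod4$ then $\gcd(m+1,(q^2-1)/2)=1$; if $q\equiv3\pmod4$ then $\gcd(m+1,(q^4-1)/2)$ divides $(q-1)/2$. Let $\mu\in\mathbb{F}_{q^2}$ with $\mu^2=-1$. Then $\hat C_n(a,b)$ is LCD for every $a\in\mathbb{F}_q\setminus\{\mu+2b,\,\mu-2b,\,-\mu+2b,\,-\mu-2b\}$.
   Context: For $a,b\in\mathbb{F}_q$ and $n\ge 2$, $\hat T_n(a,b)$ denotes the $n\times n$ symmetric tridiagonal Toeplitz matrix over $\mathbb{F}_q$ with all diagonal entries equal to $a$, all entries on the first super- and sub-diagonals equal to $b$, and all other entries $0$. $\hat C_n(a,b)$ is the $[2n,n]$ linear code over $\mathbb{F}_q$ with generator matrix $[I_n\mid \hat T_n(a,b)]$. A linear code $C$ is LCD if $C\cap C^\perp=\{0\}$ (Euclidean dual). *)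

(* Defs.v *)
From HB Require Import structures.
From mathcomp Require Import all_boot all_order all_algebra all_field.
Set Implicit Arguments. Unset Strict Implicit. Unset Printing Implicit Defensive.
Import GRing.Theory.
Local Open Scope ring_scope.

Definition That (F : fieldType) (n : nat) (a b : F) : 'M[F]_n :=
  \matrix_(i < n, j < n)
    if i == j then a
    else if ((i.+1 == j)%N || (j.+1 == i)%N) then b else 0.

Definition Chat_gen (F : fieldType) (n : nat) (a b : F) : 'M[F]_(n, n + n) :=
  row_mx 1%:M (That n a b).

Definition in_code (F : fieldType) (k N : nat) (G : 'M[F]_(k, N)) (x : 'rV[F]_N) : Prop :=
  (x <= G)%MS.

Definition in_dual (F : fieldType) (k N : nat) (G : 'M[F]_(k, N)) (x : 'rV[F]_N) : Prop :=
  forall c : 'rV[F]_N, in_code G c -> x *m c^T = 0.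

Definition is_LCD (F : fieldType) (k N : nat) (G : 'M[F]_(k, N)) : Prop :=
  forall x : 'rV[F]_N, in_code G x -> in_dual G x -> x = 0.

(* Main.v *)
Require Import Defs.
From HB Require Import structures.
From mathcomp Require Import all_boot all_order all_algebra all_field.
From mathcomp Require fingroup pgroup abelian.
From mathcomp Require Import zify ring.
Import GRing.Theory.
Local Open Scope ring_scope.
Set Implicit Arguments. Unset Strict Implicit.

Lemma qnat (F : finFieldType) p : p \in [pchar F] -> ([pchar F]).-nat #|F|.
Proof.
move=> hp. have := abelian.abelem_pgroup (abelian.fin_ring_pchar_abelem hp).
rewrite /pgroup.pgroup cardsT => H. apply: sub_in_pnat H => l _.
by rewrite (pcharf_eq hp).
Qed.

Fixpoint ss (R : fieldType) (z : R) (k : nat) : R :=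
  match k with
  | 0 => 0
  | 1 => 1
  | (S k1 as k2).+1 => z * @ss R z k2 - @ss R z k1
  end.
Arguments ss {R}.

Lemma ssSS (R : fieldType) (z : R) k : ss z k.+2 = z * ss z k.+1 - ss z k.
Proof. by []. Qed.

Lemma ss_map (R S : fieldType) (g : {rmorphism R -> S}) z k : g (ss z k) = ss (g z) k.
Proof.
suff H : forall k, g (ss z k) = ss (g z) k /\ g (ss z k.+1) = ss (g z) k.+1 by case: (H k).
elim=> [|j [IH1 IH2]]; first by rewrite /= rmorph0 rmorph1.
split=> //; by rewrite !ssSS rmorphB rmorphM IH1 IH2.
Qed.

Lemma pow_gcd (R : fieldType) (y : R) a b : (0 < a)%N -> y ^+ a = 1 -> y ^+ b = 1 -> y ^+ gcdn a b = 1.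
Proof.
move=> a0 ha hb; have [u _ /dvdnP [k hk]] := @Bezoutl a b a0.
have : y ^+ (gcdn a b + u * b) = 1 by rewrite hk mulnC exprM ha expr1n.
by rewrite exprD mulnC exprM hb expr1n mulr1.
Qed.

Lemma pow_dvd (R : fieldType) (y : R) d e : (d %| e)%N -> y ^+ d = 1 -> y ^+ e = 1.
Proof. by move=> /dvdnP [k ->] h; rewrite mulnC exprM h expr1n. Qed.

Lemma frob2 (K : fieldType) (Q : nat) (Z y : K) : ([pchar K]).-nat Q -> Z ^+ Q = Z ->
  y ^+ 2 = Z * y - 1 -> y ^+ (Q * Q) = y.
Proof.
move=> hQ hZ hy; set w := y ^+ Q.
have hw : w ^+ 2 = Z * w - 1.
  by rewrite /w -exprM mulnC exprM hy exprDn_pchar // exprNn_pchar // exprMn hZ expr1n.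
have hyy : y * (Z - y) = 1.
  by rewrite mulrBr -expr2 hy mulrC; ring.
have : (w - y) * (w - (Z - y)) = 0.
  suff -> : (w - y) * (w - (Z - y)) = w ^+ 2 - Z * w + y * (Z - y) by rewrite hw hyy; ring.
  by ring.
move/eqP; rewrite mulf_eq0 !subr_eq0 => /orP [/eqP e | /eqP e]; rewrite exprM -/w e //.
rewrite exprDn_pchar // exprNn_pchar // hZ -/w e; ring.
Qed.
Lemma ar1 Q : (Q %% 2 = 1 -> Q = ((Q - 1) %/ 2 * 2).+1)%N. Proof. lia. Qed.
Lemma ar2 Q : (Q %% 4 = 1 -> ((Q - 1) %/ 2) %% 2 = 0)%N. Proof. lia. Qed.
Lemma ar3 Q : (Q %% 4 = 3 -> ((Q - 1) %/ 2) %% 2 = 1)%N. Proof. lia. Qed.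
Lemma ar4 Q : (Q %% 2 = 1 -> Q - 1 = 2 * ((Q - 1) %/ 2))%N. Proof. lia. Qed.
Lemma ar5 Q : (Q %% 2 = 1 -> Q %% 4 = 1 \/ Q %% 4 = 3)%N. Proof. lia. Qed.
Lemma pnat_pow (R : nzRingType) p r : prime p -> p \in [pchar R] -> ([pchar R]).-nat (p ^ r)%N.
Proof.
move=> pp hp; rewrite pnatX (eq_pnat _ (pcharf_eq hp)) pnat_id //.
Qed.

Lemma core (K : closedFieldType) p (Z : K) N m r : prime p -> p \in [pchar K] ->
  N = (p ^ r * m.+1)%N -> Z != 2 -> Z != -2 -> ss Z N = 0 ->
  exists y, [/\ y ^+ 2 = Z * y - 1, y ^+ (2 * m.+1) = 1 & y ^+ 2 != 1].
Proof.
move=> pp hp hN hZ2 hZm2 hs.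
have [y hy0] := @solve_monicpoly K 2 (nth 0 [:: -1; Z]) isT.
have hy : y ^+ 2 = Z * y - 1.
  by rewrite hy0 !big_ord_recl big_ord0 /= expr0 expr1 mulr1 addr0 addrC mulrC.
set y' := Z - y.
have hy' : y' ^+ 2 = Z * y' - 1.
  rewrite /y'; suff -> : (Z - y) ^+ 2 = Z * (Z - y) - Z * y + y ^+ 2 by rewrite hy; ring.
  by ring.
have hyy : y * y' = 1 by rewrite /y' mulrBr -expr2 hy; ring.
have hsq : y ^+ 2 != 1.
  apply/eqP=> h1. have h2 : Z * y = 2 by rewrite -[Z * y](subrK 1) -hy h1.
  have : (y - 1) * (y + 1) = 0 by rewrite mulrDr !mulrBl -expr2 h1; ring.
  move/eqP; rewrite mulf_eq0 subr_eq0 addr_eq0 => /orP [/eqP e|/eqP e].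
    by move: h2; rewrite e mulr1 => e2; rewrite e2 eqxx in hZ2.
  by move: h2; rewrite e mulrN1 => e2; move: hZm2; rewrite -e2 opprK eqxx.
have key : forall k, ss Z k * (y - y') = y ^+ k - y' ^+ k.
  suff H : forall k, ss Z k * (y - y') = y ^+ k - y' ^+ k /\
             ss Z k.+1 * (y - y') = y ^+ k.+1 - y' ^+ k.+1 by move=> k; case: (H k).
  elim=> [|k [IH1 IH2]]; first by rewrite /= mul0r mul1r !expr0 expr1 subrr.
  have e1 : y * y = Z * y - 1 by rewrite -expr2.
  have e2 : y' * y' = Z * y' - 1 by rewrite -expr2.
  split=> //; rewrite ssSS mulrBl -mulrA IH1 IH2 !exprS !mulrA e1 e2; ring.
have hne : y - y' != 0.
  rewrite subr_eq0; apply/negP=> /eqP e; move: hsq; by rewrite expr2 {2}e hyy eqxx.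
have hN2 : y ^+ (2 * N) = 1.
  have : y ^+ N = y' ^+ N.
    by apply/eqP; rewrite -subr_eq0 -key hs mul0r.
  by move=> e; rewrite mulnC exprM expr2 {2}e -exprMn hyy expr1n.
exists y; split=> //.
have : (y ^+ (2 * m.+1) - 1) ^+ (p ^ r)%N = 0.
  rewrite exprDn_pchar ?pnat_pow // exprNn_pchar ?pnat_pow // expr1n -exprM.
  by rewrite -mulnA (mulnC m.+1) -hN hN2 subrr.
by move/eqP; rewrite expf_eq0 subr_eq0 => /andP [_ /eqP].
Qed.
Lemma pt (R : fieldType) (x c : R) (i j : nat) :
  (if i == j then x else if (i.+1 == j) || (j.+1 == i) then c else 0) =
  x * (i == j)%:R + c * (i.+1 == j)%:R + c * (i == j.+1)%:R.
Proof.
have [->|n1] := eqVneq i j.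
  have h1 : (j.+1 == j) = false by apply/eqP; lia.
  have h2 : (j == j.+1) = false by apply/eqP; lia.
  by rewrite h1 h2 /= mulr1 !mulr0 !addr0.
have [<-|n2] := eqVneq i.+1 j.
  have h2 : (i == i.+2) = false by apply/eqP; lia.
  by rewrite h2 /= mulr1 !mulr0 add0r addr0.
have [e3|n3] := eqVneq i j.+1.
  by rewrite /= mulr1 !mulr0 !add0r.
by rewrite /= !mulr0 !addr0.
Qed.

Lemma kernel (R : fieldType) n (x c : R) (w : 'rV[R]_n) : c != 0 ->
  ss (- x / c) n.+1 != 0 -> w *m That n x c = 0 -> w = 0.
Proof.
move=> hc hs H.
pose W k := \sum_(j < n) w 0 j * ((j : nat) == k)%:R.
have Wj : forall j : 'I_n, W j = w 0 j.
  move=> j; rewrite /W (bigD1 j) //= eqxx mulr1 big1 ?addr0 // => i nij.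
  by rewrite (_ : (i : nat) == j = false) ?mulr0 //; apply/negbTE.
have WO : forall k, (n <= k)%N -> W k = 0.
  move=> k hk; rewrite /W big1 // => i _.
  by rewrite (_ : (i : nat) == k = false) ?mulr0 //; apply/eqP; have := ltn_ord i; lia.
have colE : forall j : 'I_n, (w *m That n x c) 0 j =
    x * W j + c * (\sum_(i < n) w 0 i * (i.+1 == j :> nat)%:R) + c * W j.+1.
  move=> j; rewrite !mxE /W !mulr_sumr -!big_split /=; apply: eq_bigr => i _.
  rewrite mxE.
  have -> : (i == j) = (i == j :> nat) by [].
  by rewrite pt; ring.
have hE : forall j, (j < n)%N ->
    x * W j + c * (if j is j'.+1 then W j' else 0) + c * W j.+1 = 0.
  move=> j hj; have e := colE (Ordinal hj); rewrite H mxE /= in e.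
  have -> : (if j is j'.+1 then W j' else 0) = \sum_(i < n) w 0 i * (i.+1 == j :> nat)%:R.
    case: j {hj e} => [|j].
      by rewrite big1 // => i _; rewrite mulr0.
    by rewrite /W; apply: eq_bigr => i _; rewrite eqSS.
  by rewrite -e.
set z := - x / c.
have rec : forall k, (k.+1 <= n)%N -> W k = W 0 * ss z k.+1 /\ W k.+1 = W 0 * ss z k.+2.
  elim=> [|k IH] hk.
    split; first by rewrite /= mulr1.
    have := hE 0 hk; rewrite /= mulr0 addr0 => e.
    rewrite /= mulr1 subr0 /z; apply: (mulfI hc).
    have -> : c * W 1 = - (x * W 0) by apply/eqP; rewrite -addr_eq0 addrC e.
    by field.
  have [IH1 IH2] := IH (ltnW hk).
  split=> //.
  have e := hE k.+1 hk; simpl in e.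
  rewrite ssSS; apply: (mulfI hc).
  have -> : c * W k.+2 = - (x * W k.+1) - c * W k by apply/eqP; rewrite -opprD -addr_eq0 addrC e.
  by rewrite IH1 IH2 /z; field.
have W00 : W 0 = 0.
  have [n0|npos] := posnP n; first by apply: WO; rewrite n0.
  have [_ e] := rec n.-1 (ltac:(by rewrite prednK)).
  rewrite prednK // in e.
  have : W 0 * ss z n.+1 == 0 by rewrite -e WO.
  by rewrite mulf_eq0 (negbTE hs) orbF => /eqP.
have Wall : forall k, (k.+1 <= n)%N -> W k = 0.
  by move=> k hk; have [-> _] := rec k hk; rewrite W00 mul0r.
apply/rowP => j; rewrite mxE -Wj Wall //.
Qed.
Lemma That_tr (R : fieldType) n (a b : R) : (That n a b)^T = That n a b.
Proof.
by apply/matrixP => i j; rewrite !mxE [j == i]eq_sym orbC.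
Qed.

Lemma That_map (R S : fieldType) (f : {rmorphism R -> S}) n (a b : R) :
  map_mx f (That n a b) = That n (f a) (f b).
Proof.
apply/matrixP => i j; rewrite !mxE; case: (i == j) => //.
by case: (_ || _); rewrite ?rmorph0.
Qed.

Lemma That_sub (R : fieldType) n (a b e : R) : That n a b - e%:M = That n (a - e) b.
Proof.
apply/matrixP => i j; rewrite !mxE; case: (i == j) => /=; first by rewrite mulr1n.
by rewrite mulr0n subr0.
Qed.

Lemma lcd_red (R : fieldType) n (T : 'M[R]_n) : T^T = T ->
  (forall u : 'rV_n, u *m (1%:M + T *m T) = 0 -> u = 0) ->
  is_LCD (row_mx 1%:M T).
Proof.
move=> hT hu x /submxP [u ->] hd.
have h0 : u *m row_mx 1%:M T *m (row_mx 1%:M T)^T = 0.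
  apply/rowP => i.
  have e := hd (row i (row_mx 1%:M T)) (row_sub i _).
  have : col i (u *m row_mx 1%:M T *m (row_mx 1%:M T)^T) = 0.
    by rewrite colE -mulmxA -colE -tr_row.
  by move/matrixP/(_ 0 0); rewrite !mxE => ->.
move: h0; rewrite tr_row_mx -mulmxA mul_row_col trmx1 mul1mx hT => /hu ->.
by rewrite mul0mx.
Qed.
Lemma nat_transfer (R S : nzRingType) p q : p \in [pchar R] -> p \in [pchar S] ->
  ([pchar R]).-nat q -> ([pchar S]).-nat q.
Proof.
by move=> hR hS; rewrite (eq_pnat _ (pcharf_eq hR)) (eq_pnat _ (pcharf_eq hS)).
Qed.

Lemma two_neq0 (R : nzRingType) p : p \in [pchar R] -> odd p -> (2%:R : R) != 0.
Proof.
move=> hp op; apply/negP => h2.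
have h : 2 \in [pchar R] by rewrite inE h2 andbT.
by move: h; rewrite (pcharf_eq hp) inE => /eqP e; rewrite -e in op.
Qed.

Lemma core_L (F L : finFieldType) (f : {rmorphism F -> L}) p n r m (a b : F) (eps : L) :
  prime p -> odd p -> p \in [pchar F] -> b != 0 ->
  n.+1 = (p ^ r * m.+1)%N ->
  (#|F| %% 4 = 1 -> gcdn m.+1 ((#|F| ^ 2 - 1) %/ 2) = 1)%N ->
  (#|F| %% 4 = 3 -> gcdn m.+1 ((#|F| ^ 4 - 1) %/ 2) %| (#|F| - 1) %/ 2)%N ->
  #|L| = (#|F| ^ 2)%N -> eps ^+ 2 = -1 ->
  f a != eps + 2 * f b -> f a != eps - 2 * f b ->
  ss (- (f a - eps) / f b) n.+1 != 0.
Proof.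
move=> pp op hpF hb hN h1 h3 hL heps ha1 ha2.
set q := #|F|.
have hfb : f b != 0 by rewrite fmorph_eq0.
have hpL : p \in [pchar L] := rmorph_pchar f hpF.
have [K [g _]] := countable_algebraic_closure L.
have hpK : p \in [pchar K] := rmorph_pchar g hpL.
have qF : ([pchar F]).-nat q := qnat hpF.
have qL : ([pchar L]).-nat q := nat_transfer hpF hpL qF.
have qK : ([pchar K]).-nat q := nat_transfer hpF hpK qF.
have q0 : (0 < q)%N by rewrite /q; apply: (leq_trans _ (finNzRing_gt1 F)).
have qodd : (q %% 2 = 1)%N.
  have : ~~ (2 %| q)%N.
    apply/negP => h2; have : 2 \in \pi(q) by rewrite mem_primes q0 h2.
    move/(pnatPpi qF); rewrite (pcharf_eq hpF) inE => /eqP e; by rewrite -e in op.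
  by rewrite dvdn2 negbK modn2 => ->.
set z := - (f a - eps) / f b.
have hzq : z ^+ q = - (f a - eps ^+ q) / f b.
  have hfq : forall c : F, f c ^+ q = f c by move=> c; rewrite -rmorphXn expf_card.
  by rewrite /z expr_div_n exprNn_pchar // exprDn_pchar // exprNn_pchar // !hfq.
set k := ((q - 1) %/ 2)%N.
have hqk : q = (k * 2).+1 by rewrite /k; apply: ar1.
have heq : eps ^+ q = eps * (-1) ^+ k.
  by rewrite hqk exprS mulnC exprM heps.
apply/negP => /eqP hs.
set Z := g z.
have hgi : forall u v : L, g u = g v -> u = v := fmorph_inj g.
have hZ2 : Z != 2.
  apply/negP => /eqP e.
  have : z = 2 by apply: hgi; rewrite -/Z e rmorph_nat.
  rewrite /z => /(congr1 (fun t => t * f b)); rewrite mulfVK // => e2.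
  by apply: (negP ha2); apply/eqP; rewrite -e2 opprK addrC subrK.
have hZm2 : Z != -2.
  apply/negP => /eqP e.
  have : z = -2 by apply: hgi; rewrite -/Z e rmorphN rmorph_nat.
  rewrite /z => /(congr1 (fun t => t * f b)); rewrite mulfVK // mulNr => /oppr_inj e2.
  by apply: (negP ha1); apply/eqP; rewrite -e2 addrC subrK.
have hsK : ss Z n.+1 = 0 by rewrite /Z -ss_map hs rmorph0.
have [y [hy hym hy2]] := core pp hpK hN hZ2 hZm2 hsK.
have y0 : y != 0.
  apply/negP => /eqP y0; move: hy; rewrite y0 expr2 !mulr0 sub0r => /eqP.
  by rewrite eq_sym oppr_eq0 oner_eq0.
have hm0 : (0 < 2 * m.+1)%N by [].
have : (q %% 4 = 1)%N \/ (q %% 4 = 3)%N by apply: ar5.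
case=> hq4.
-
  have kev : (-1 : L) ^+ k = 1.
    have : (k %% 2 = 0)%N by rewrite /k; apply: ar2.
    by rewrite modn2 -signr_odd => ->.
  have hzz : z ^+ q = z by rewrite hzq heq kev mulr1.
  have hZZ : Z ^+ q = Z by rewrite /Z -rmorphXn hzz.
  have hyq := frob2 qK hZZ hy.
  have hy1 : y ^+ (q ^ 2 - 1) = 1.
    apply: (mulIf y0); rewrite mul1r -exprSr -mulnn subn1 prednK //.
    by rewrite muln_gt0 q0.
  have := pow_gcd hm0 hym hy1.
  have hQ : (q ^ 2 - 1 = 2 * ((q ^ 2 - 1) %/ 2))%N.
    have : ((q ^ 2) %% 2 = 1)%N by rewrite modn2 oddX /= -modn2 qodd.
    by move/ar4.
  have g1 := h1 hq4; rewrite -/q in g1.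
  rewrite hQ -muln_gcdr g1 muln1 => e.
  by rewrite e eqxx in hy2.
-
  have kod : (-1 : L) ^+ k = -1.
    have : (k %% 2 = 1)%N by rewrite /k; apply: ar3.
    by rewrite modn2 -signr_odd => ->.
  have hzz : z ^+ (q ^ 2)%N = z by rewrite -hL expf_card.
  have hZZ : Z ^+ (q ^ 2)%N = Z by rewrite /Z -rmorphXn hzz.
  have qK2 : ([pchar K]).-nat (q ^ 2)%N by rewrite pnatX qK.
  have hyq := frob2 qK2 hZZ hy.
  have hy1 : y ^+ (q ^ 4 - 1) = 1.
    have e4 : (q ^ 4 = q ^ 2 * q ^ 2)%N by rewrite -expnD.
    apply: (mulIf y0); rewrite mul1r -exprSr subn1 prednK; first by rewrite e4 hyq.
    by rewrite expn_gt0 q0.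
  have := pow_gcd hm0 hym hy1.
  have hQ : (q ^ 4 - 1 = 2 * ((q ^ 4 - 1) %/ 2))%N.
    have : ((q ^ 4) %% 2 = 1)%N by rewrite modn2 oddX /= -modn2 qodd.
    by move/ar4.
  rewrite hQ -muln_gcdr => e.
  have hq1 : y ^+ (q - 1) = 1.
    apply: (pow_dvd _ e).
    rewrite {1}(ar4 qodd).
    have g3 := h3 hq4; rewrite -/q in g3.
    by rewrite dvdn_pmul2l.
  have hyq1 : y ^+ q = y.
    by rewrite -[in LHS](@subnK 1 q) // exprD hq1 mul1r expr1.
  set y' := Z - y.
  have hyy : y * y' = 1 by rewrite /y' mulrBr -expr2 hy; ring.
  have hy'q : y' ^+ q = y'.
    apply: (mulfI y0); rewrite hyy -{1}hyq1 -exprMn hyy expr1n //.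
  have hZq : Z ^+ q = Z.
    have -> : Z = y + y' by rewrite /y' addrC subrK.
    by rewrite exprDn_pchar // hyq1 hy'q.
  have hzq2 : z ^+ q = z by apply: hgi; rewrite rmorphXn.
  move: hzq2; rewrite hzq heq kod mulrN1 /z => /(congr1 (fun t => - t * f b)).
  rewrite !mulNr !mulfVK // !opprK => /addrI e2.
  have : 2%:R * eps = 0 by rewrite mulr2n mulrDl mul1r {1}e2 addNr.
  move/eqP; rewrite mulf_eq0 (negbTE (two_neq0 hpL op)) /= => /eqP e0.
  by move: heps; rewrite e0 expr2 mulr0 => /eqP; rewrite eq_sym oppr_eq0 oner_eq0.
Qed.
Unset Implicit Arguments.

Theorem corollary2p8
  (F : finFieldType) (p : nat) (b : F) (n r m : nat)
  (L : finFieldType) (f : {rmorphism F -> L}) (mu : L) :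
  prime p -> odd p -> p \in [pchar F] ->
  b != 0 ->
  (2 <= n)%N ->
  (p ^ r %| n.+1)%N -> ~~ (p ^ r.+1 %| n.+1)%N ->
  n.+1 = (p ^ r * m.+1)%N ->
  (1 <= r)%N ->
  (#|F| %% 4 = 1 -> gcdn m.+1 ((#|F| ^ 2 - 1) %/ 2) = 1)%N ->
  (#|F| %% 4 = 3 -> gcdn m.+1 ((#|F| ^ 4 - 1) %/ 2) %| (#|F| - 1) %/ 2)%N ->
  #|L| = (#|F| ^ 2)%N ->
  mu ^+ 2 = -1 ->
  forall a : F,
    f a != mu + f (2 * b) -> f a != mu - f (2 * b) ->
    f a != - mu + f (2 * b) -> f a != - mu - f (2 * b) ->
    is_LCD (Chat_gen n a b).
Proof.
move=> pp op hpF hb hn hr1 hr2 hN hr h1 h3 hL hmu a ha1 ha2 ha3 ha4.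
rewrite /Chat_gen; apply: lcd_red; first exact: That_tr.
move=> u hu.
have hf2 : f (2 * b) = 2 * f b by rewrite rmorphM rmorph_nat.
rewrite hf2 in ha1 ha2 ha3 ha4.
have hmu' : (- mu) ^+ 2 = -1 by rewrite sqrrN.
have s1 := @core_L F L f p n r m a b mu pp op hpF hb hN h1 h3 hL hmu ha1 ha2.
have s2 := @core_L F L f p n r m a b (- mu) pp op hpF hb hN h1 h3 hL hmu' ha3 ha4.
have hfb : f b != 0 by rewrite fmorph_eq0.
set T' := That n (f a) (f b).
have hv : map_mx f u *m ((T' - mu%:M) *m (T' - (- mu)%:M)) = 0.
  have -> : (T' - mu%:M) *m (T' - (- mu)%:M) = 1%:M + T' *m T'.
    rewrite mulmxBl !mulmxBr mul_mx_scalar mul_scalar_mx -scalar_mxM mulrN -expr2 hmu.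
    by rewrite scaleNr opprK opprB addrA addrAC addrK addrC opprK.
  by rewrite /T' -That_map -(map_mx1 f) -map_mxM -map_mxD -map_mxM hu map_mx0.
rewrite !That_sub mulmxA in hv.
have hw := kernel hfb s2 hv.
have hv0 := kernel hfb s1 hw.
apply/matrixP => i j; move/matrixP: hv0 => /(_ i j); rewrite !mxE => /eqP.
by rewrite fmorph_eq0 => /eqP.
Qed.
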